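(* Let $X$ be a separable symmetric space on $[0,1]$. Then the following are equivalent: (a) for every $f\in X$ with $\int_0^1f(t)\,dt\ne0$ there exists $\lambda_0\in\mathbb{R}$ with $\|1-\lambda_0f\|_X<1$; (b) $X$ is smooth at the function identically equal to $1$.
   Context: A symmetric space $X$ on $[0,1]$ is a Banach space of (equivalence classes of) real-valued Lebesgue measurable functions on $[0,1]$ such that: (a) if $y\in X$ and $x$ is measurable with $|x|\le|y|$ a.e., then $x\in X$ and $\|x\|_X\le\|y\|_X$; (b) if $x,y$ are equimeasurable and $y\in X$, then $x\in X$ and $\|x\|_X=\|y\|_X$; normalized so that $\|\chi_{[0,1]}\|_X=1$. A Banach space $E$ is smooth at $x_0\in E$ with $\|x_0\|_E=1$ if there is a unique $x^*\in E^*$ with $\|x^*\|_{E^*}=x^*(x_0)=1$. *)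

(* Defs.v *)
From HB Require Import structures.
From mathcomp Require Import all_boot all_order all_algebra.
From mathcomp Require Import all_classical all_reals all_analysis.
Set Implicit Arguments. Unset Strict Implicit. Unset Printing Implicit Defensive.
Import Order.TTheory GRing.Theory Num.Theory.
Import numFieldNormedType.Exports.
Local Open Scope classical_set_scope.
Local Open Scope ring_scope.

Section Defs.
Variable R : realType.

Local Notation mu := (@lebesgue_measure R).

Definition I01 : set R := `[0%R, 1%R]%classic.

Definition ae01 (P : R -> Prop) : Prop :=
  mu.-negligible [set t | I01 t /\ ~ P t].

Definition equimeasurable01 (x y : R -> R) : Prop :=
  forall tau : R, 0 < tau ->
    mu [set s | I01 s /\ tau < `|x s|] =
    mu [set s | I01 s /\ tau < `|y s|].

(** X (a set of measurable functions on [0,1], elements identified a.e.)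
    with norm N is a symmetric space on [0,1]. *)
Record symmetric_space (X : set (R -> R)) (N : (R -> R) -> R) : Prop := {
  ss_meas : forall f, X f -> measurable_fun I01 f;
  ss_zero : X (fun _ => 0);
  ss_add : forall f g, X f -> X g -> X (fun t => f t + g t);
  ss_scale : forall (a : R) f, X f -> X (fun t => a * f t);
  ss_norm_ge0 : forall f, X f -> 0 <= N f;
  ss_norm_eq0 : forall f, X f -> (N f = 0 <-> ae01 (fun t => f t = 0));
  ss_norm_triangle : forall f g, X f -> X g -> N (fun t => f t + g t) <= N f + N g;
  ss_norm_scale : forall (a : R) f, X f -> N (fun t => a * f t) = `|a| * N f;
  ss_complete : forall u : nat -> (R -> R), (forall n, X (u n)) ->
    (forall e : R, 0 < e -> exists n0 : nat, forall m n : nat,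
        (n0 <= m)%N -> (n0 <= n)%N -> N (fun t => u m t - u n t) < e) ->
    exists f, X f /\ forall e : R, 0 < e -> exists n0 : nat, forall n : nat,
        (n0 <= n)%N -> N (fun t => u n t - f t) < e;
  ss_ideal : forall x y : R -> R, X y -> measurable_fun I01 x ->
    ae01 (fun t => `|x t| <= `|y t|) -> X x /\ N x <= N y;
  ss_symm : forall x y : R -> R, X y -> measurable_fun I01 x ->
    equimeasurable01 x y -> X x /\ N x = N y;
  ss_one : X (fun _ => 1);
  ss_normalized : N (fun _ => 1) = 1
}.

Definition separable_space (X : set (R -> R)) (N : (R -> R) -> R) : Prop :=
  exists s : nat -> (R -> R), (forall n, X (s n)) /\
    forall f, X f -> forall e : R, 0 < e -> exists n, N (fun t => f t - s n t) < e.

Definition bounded_linear_functional (X : set (R -> R)) (N : (R -> R) -> R)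
    (phi : (R -> R) -> R) : Prop :=
  (forall (a : R) f g, X f -> X g -> phi (fun t => a * f t + g t) = a * phi f + phi g) /\
  (exists C : R, forall f, X f -> `|phi f| <= C * N f).

Definition dual_norm (X : set (R -> R)) (N : (R -> R) -> R)
    (phi : (R -> R) -> R) : R :=
  sup [set `|phi f| | f in [set f | X f /\ N f <= 1]].

Definition norming_at (X : set (R -> R)) (N : (R -> R) -> R)
    (x0 : R -> R) (phi : (R -> R) -> R) : Prop :=
  [/\ bounded_linear_functional X N phi, dual_norm X N phi = 1 & phi x0 = 1].

(** Smoothness at x0 (with ||x0|| = 1): there is a unique norming functional,
    functionals (elements of X^* ) being identified when they agree on X. *)
Definition smooth_at (X : set (R -> R)) (N : (R -> R) -> R) (x0 : R -> R) : Prop :=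
  [/\ N x0 = 1,
      (exists phi, norming_at X N x0 phi) &
      (forall phi psi, norming_at X N x0 phi -> norming_at X N x0 psi ->
         forall f, X f -> phi f = psi f)].
End Defs.

(* Main.v *)
Require Import Defs.
From HB Require Import structures.
From mathcomp Require Import all_boot all_order all_algebra.
From mathcomp Require Import all_classical all_reals all_analysis.
From mathcomp Require Import ring lra zify measurable_realfun.
Import Order.TTheory GRing.Theory Num.Theory.
Import numFieldNormedType.Exports.
Local Open Scope classical_set_scope.
Local Open Scope ring_scope.

Set Implicit Arguments. Unset Strict Implicit. Unset Printing Implicit Defensive.

Lemma sum_shift1 (n : nat) (G : nat -> nat) :
  (\sum_(j < n) G (j.+1 %% n) = \sum_(j < n) G j)%N.
Proof.
case: n => [|n]; first by rewrite !big_ord0.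
rewrite big_ord_recr big_ord_recl /= modnn addnC; congr (_ + _)%N.
apply: eq_bigr => j _; rewrite modn_small //.
by have := ltn_ord j; lia.
Qed.

Lemma sum_rot (n c : nat) (F : nat -> nat) :
  (\sum_(j < n) F ((c + j) %% n) = \sum_(j < n) F j)%N.
Proof.
elim: c => [|c IH].
  by apply: eq_bigr => j _; rewrite add0n modn_small.
rewrite -IH -(sum_shift1 n (fun x => F ((c + x) %% n)%N)).
by apply: eq_bigr => j _; rewrite modnDmr addSnnS.
Qed.

Lemma sum_ltp (n p : nat) : (\sum_(j < n) (j < p : nat) = minn n p)%N.
Proof.
elim: n => [|n IH]; first by rewrite big_ord0 min0n.
rewrite big_ord_recr /= IH; case: ltnP => H; lia.
Qed.

Lemma sum_rot_lt (n c p : nat) : (p <= n)%N ->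
  (\sum_(j < n) (((c + j) %% n) < p : nat) = p)%N.
Proof.
move=> pn; rewrite (sum_rot n c (fun x => (x < p : nat))) sum_ltp; lia.
Qed.

Section Cnt.
Variable R : realType.

Definition cnt (A : nat -> set R) (L : nat) (t : R) : R :=
  \sum_(l < L) \1_(A l) t.

Definition nested (A : nat -> set R) := forall i j, (i <= j)%N -> A j `<=` A i.

Lemma cnt_ge0 A L t : 0 <= cnt A L t.
Proof. by apply: sumr_ge0 => l _; rewrite /indic ler0n. Qed.

Lemma cnt_leL A L t : cnt A L t <= L%:R.
Proof.
elim: L => [|L IH]; first by rewrite /cnt big_ord0.
rewrite /cnt big_ord_recr /= -/(cnt A L t) -natr1 lerD //.
Qed.

Lemma cnt_ge A L t j : nested A -> (j < L)%N -> A j t -> j.+1%:R <= cnt A L t.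
Proof.
move=> nA; elim: L j => [|L IH] j //; rewrite ltnS leq_eqVlt => /orP[/eqP ->|jL] Ajt.
  rewrite /cnt big_ord_recr /= -/(cnt A L t) /indic mem_set ?Ajt // -natr1 lerD2r.
  case: L IH Ajt => [|L] IH Ajt; first exact: cnt_ge0.
  by apply: IH => //; apply: (nA L L.+1) => //.
rewrite /cnt big_ord_recr /= -/(cnt A L t); apply: ler_wpDr; last exact: IH.
by rewrite /indic ler0n.
Qed.

Lemma cnt_le A L t j : nested A -> ~ A j t -> cnt A L t <= j%:R.
Proof.
move=> nA nAj; elim: L => [|L IH]; first by rewrite /cnt big_ord0.
rewrite /cnt big_ord_recr /= -/(cnt A L t).
case: (ltnP L j) => Lj.
  apply: (@le_trans _ _ (L%:R + 1)); first by rewrite lerD ?cnt_leL // /indic; case: (_ \in _).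
  by rewrite natr1 ler_nat.
rewrite /indic memNset ?addr0 //; by move=> /(nA _ _ Lj).
Qed.

Lemma cnt_level A L (tau : R) (j : nat) : nested A -> (forall l, A l `<=` (@I01 R)) ->
  j%:R <= tau -> tau < j.+1%:R ->
  [set s | (@I01 R) s /\ tau < `|cnt A L s|] = if (j < L)%N then A j else set0.
Proof.
move=> nA AI jt tj; apply/seteqP; split => s /=.
  move=> [Is]; rewrite ger0_norm ?cnt_ge0 // => tc.
  have Ajs : A j s.
    apply: contrapT => nAj; have := cnt_le L nA nAj; lra.
  case: ltnP => // jL.
  have h1 : (L%:R : R) <= j%:R by rewrite ler_nat.
  have h2 : cnt A L s <= L%:R := cnt_leL A L s.
  exfalso; lra.
case: ltnP => jL // Ajs; split; first exact: AI Ajs.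
rewrite ger0_norm ?cnt_ge0 //; apply: (lt_le_trans tj); exact: cnt_ge.
Qed.

End Cnt.


Section Meas.
Variable R : realType.
Local Notation mu := (@lebesgue_measure R).

Lemma cell_iff (n : nat) (t : R) (i : nat) : (0 < n)%N ->
  (i%:R / n%:R <= t < i.+1%:R / n%:R) = (i%:R <= n%:R * t < i.+1%:R).
Proof.
move=> n0; have n0' : (0 : R) < n%:R by rewrite ltr0n.
by rewrite ler_pdivrMr // ltr_pdivlMr // [t * _]mulrC.
Qed.

Definition cellF (n : nat) (S : nat -> bool) (i : nat) : set R :=
  if S i then `[i%:R / n%:R, i.+1%:R / n%:R[%classic else set0.

Definition cellset (n : nat) (S : nat -> bool) : set R :=
  [set t | @I01 R t /\ (Num.trunc (n%:R * t) < n)%N /\ S (Num.trunc (n%:R * t))].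

Lemma cell_eq (n : nat) (S : nat -> bool) : (0 < n)%N ->
  cellset n S = \big[setU/set0]_(i < n) cellF n S i.
Proof.
move=> n0; have n0' : (0 : R) < n%:R by rewrite ltr0n.
  rewrite /cellset -bigcup_mkord; apply/seteqP; split => t.
    move=> [It [tn St]]; exists (Num.trunc (n%:R * t)) => //.
    rewrite /cellF St /= in_itv /= cell_iff //.
    apply: truncn_itv; apply: mulr_ge0; first exact: ltW.
    by move: It; rewrite /I01 /= in_itv /= => /andP[].
  move=> [i /= iltn]; rewrite /cellF; case Si: (S i) => //=.
  rewrite in_itv /= => /[dup] Ht; rewrite cell_iff // => Hi.
  have t0 : 0 <= t.
    move: Ht => /andP[+ _]; apply: le_trans; apply: divr_ge0; exact: ler0n.
  have -> : Num.trunc (n%:R * t) = i by apply: truncn_def.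
  split; last by split.
  rewrite /I01 /= in_itv /= t0 /=.
  move: Ht => /andP[_ /ltW]; move/le_trans; apply.
  by rewrite ler_pdivrMr // mul1r ler_nat.
Qed.

Lemma cell_measurable (n : nat) (S : nat -> bool) : (0 < n)%N ->
  measurable (cellset n S).
Proof.
move=> n0; rewrite cell_eq //; apply: bigsetU_measurable => i _.
by rewrite /cellF; case: (S i).
Qed.

Lemma cell_sub (n : nat) (S : nat -> bool) : cellset n S `<=` @I01 R.
Proof. by move=> t []. Qed.

Lemma cell_meas (n : nat) (S : nat -> bool) : (0 < n)%N ->
  mu (cellset n S) = (((\sum_(i < n) (S i : nat))%:R / n%:R : R))%:E.
Proof.
move=> n0; have n0' : (0 : R) < n%:R by rewrite ltr0n.
rewrite cell_eq // measure_bigsetU_ord.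
- rewrite (eq_bigr (fun i : 'I_n => (((S i : nat)%:R / n%:R : R))%:E)); last first.
    move=> i _; rewrite /cellF; case: (S i) => /=; last by rewrite measure0 mul0r.
    rewrite lebesgue_measure_itv /= lte_fin ltr_pM2r ?invr_gt0 // ltr_nat ltnSn.
    by rewrite -EFinD -mulrBl -natrB // subSnn mul1r.
  by rewrite sumEFin natr_sum mulr_suml.
- by move=> i; rewrite /cellF; case: (S i).
- move=> i j _ _ [t [Fi Fj]]; apply: val_inj => /=.
  move: Fi Fj; rewrite /cellF; case: (S i); case: (S j) => //=.
  rewrite !in_itv /= => /[dup] Hi + /[dup] Hj.
  have t0 : 0 <= t.
    move: Hi => /andP[+ _]; apply: le_trans; apply: divr_ge0; exact: ler0n.
  rewrite !cell_iff // => /truncn_def <- /truncn_def <- //.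
Qed.

End Meas.


Section Sym.
Variable R : realType.
Local Notation mu := (@lebesgue_measure R).
Variables (X : set (R -> R)) (N : (R -> R) -> R).
Hypothesis HX : symmetric_space X N.

Lemma I01_0 : @I01 R 0.
Proof. by rewrite /I01 /= in_itv /= lexx ler01. Qed.

Lemma I01_ge0 t : @I01 R t -> 0 <= t.
Proof. by rewrite /I01 /= in_itv /= => /andP[]. Qed.

Lemma I01_le1 t : @I01 R t -> t <= 1.
Proof. by rewrite /I01 /= in_itv /= => /andP[]. Qed.

Lemma ae01_all (P : R -> Prop) : (forall t, @I01 R t -> P t) -> ae01 P.
Proof.
move=> H; apply: (negligibleS _ (@negligible_set0 _ _ _ mu)).
by move=> t [It nP]; apply: nP; exact: H.
Qed.

Lemma ae01_but1 (P : R -> Prop) : (forall t, @I01 R t -> t != 1 -> P t) -> ae01 P.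
Proof.
move=> H; exists [set 1]; split => //; first exact: lebesgue_measure_set1.
move=> t [It nP] /=; case: (eqVneq t 1) => // t1; exfalso; apply: nP; exact: H.
Qed.

Lemma X_const (c : R) : X (fun _ => c) /\ N (fun _ => c) = `|c|.
Proof.
have -> : (fun _ : R => c) = (fun t => c * (fun _ => 1) t) by apply/funext => t; rewrite mulr1.
split; first exact: (ss_scale HX c (ss_one HX)).
by rewrite (ss_norm_scale HX c (ss_one HX)) (ss_normalized HX) mulr1.
Qed.

Lemma X_bdd (f : R -> R) (c : R) : measurable_fun (@I01 R) f ->
  (forall t, @I01 R t -> `|f t| <= c) -> X f /\ N f <= c.
Proof.
move=> mf fc; have c0 : 0 <= c by apply: le_trans (fc 0 I01_0).
have [Xc Nc] := X_const c.
have [] := ss_ideal HX Xc mf (ae01_all _).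
  by move=> t It /=; rewrite (ger0_norm c0); exact: fc.
by move=> Xf Nf; split => //; rewrite -(ger0_norm c0) -Nc.
Qed.

Lemma N_sum (F : nat -> R -> R) (k : nat) : (forall j, X (F j)) ->
  X (fun t => \sum_(j < k) F j t) /\ N (fun t => \sum_(j < k) F j t) <= \sum_(j < k) N (F j).
Proof.
move=> XF; elim: k => [|k [IH1 IH2]].
  have -> : (fun t : R => \sum_(j < 0) F j t) = (fun _ => 0) by apply/funext => t; rewrite big_ord0.
  rewrite big_ord0 (X_const 0).2 normr0; split => //; exact: (X_const 0).1.
have -> : (fun t : R => \sum_(j < k.+1) F j t) = (fun t => (fun t => \sum_(j < k) F j t) t + F k t).
  by apply/funext => t; rewrite big_ord_recr.
split; first exact: (ss_add HX IH1 (XF k)).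
apply: le_trans (ss_norm_triangle HX IH1 (XF k)) _.
by rewrite big_ord_recr /= lerD2r.
Qed.

Lemma meas_cnt (A : nat -> set R) L : (forall l, measurable (A l)) ->
  measurable_fun (@I01 R) (cnt A L).
Proof.
move=> mA; rewrite /cnt.
apply: (@measurable_sum _ _ _ _ _ (index_enum 'I_L) (fun l t => \1_(A l) t)) => l.
exact: measurable_indic.
Qed.

Lemma X_cnt (A : nat -> set R) L : (forall l, measurable (A l)) ->
  X (cnt A L) /\ N (cnt A L) <= L%:R.
Proof.
move=> mA; apply: X_bdd; first exact: meas_cnt.
by move=> t _; rewrite ger0_norm ?cnt_ge0 // cnt_leL.
Qed.

Lemma N_cnt_eq (A C : nat -> set R) L : nested A -> nested C ->
  (forall l, measurable (A l)) -> (forall l, measurable (C l)) ->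
  (forall l, A l `<=` @I01 R) -> (forall l, C l `<=` @I01 R) ->
  (forall l, (l < L)%N -> mu (A l) = mu (C l)) ->
  N (cnt A L) = N (cnt C L).
Proof.
move=> nA nC mA mC AI CI AC.
suff E : equimeasurable01 (cnt A L) (cnt C L).
  exact: (ss_symm HX (X_cnt L mC).1 (meas_cnt L mA) E).2.
move=> tau tau0.
have /andP[h1 h2] := truncn_itv (ltW tau0).
rewrite (cnt_level _ nA AI h1 h2) (cnt_level _ nC CI h1 h2).
by case: ifP => // /AC.
Qed.

End Sym.


Section Main.
Variable R : realType.
Local Notation mu := (@lebesgue_measure R).
Variables (X : set (R -> R)) (N : (R -> R) -> R).
Hypothesis HX : symmetric_space X N.

Lemma mu_I01 : mu (@I01 R) = 1%:E.
Proof. by rewrite /I01 lebesgue_measure_itv /= lte_fin ltr01 oppr0 adde0. Qed.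

Lemma cnt_mono (A C : nat -> set R) L t : (forall l, A l `<=` C l) -> cnt A L t <= cnt C L t.
Proof.
move=> AC; apply: ler_sum => l _; rewrite /indic.
case: (boolP (t \in A l)) => [/set_mem/AC/mem_set -> //|_]; exact: ler0n.
Qed.

Lemma main_ineq (B : nat -> set R) L : nested B -> (forall l, measurable (B l)) ->
  (forall l, B l `<=` @I01 R) -> \sum_(l < L) fine (mu (B l)) <= N (cnt B L).
Proof.
move=> nB mB BI.
pose m := fun l => fine (mu (B l)).
have mI : measurable (@I01 R) by rewrite /I01; exact: measurable_itv.
have leB l : (mu (B l) <= 1%:E)%E.
  rewrite -mu_I01; apply: (le_measure mu); rewrite ?inE; [exact: mB | exact: mI | exact: BI].
have mBfin l : mu (B l) = (m l)%:E.
  rewrite /m fineK // ge0_fin_numE ?measure_ge0 //.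
  exact: (le_lt_trans (leB l) (ltry _)).
have m01 l : 0 <= m l <= 1.
  by rewrite -!lee_fin -mBfin measure_ge0 /= leB.
have mdec i j : (i <= j)%N -> m j <= m i.
  move=> ij; rewrite -lee_fin -!mBfin; apply: (le_measure mu); rewrite ?inE; [exact: mB | exact: mB | exact: nB].
rewrite -/(\sum_(l < L) m l).
apply/ler_addgt0Pr => e e0.
pose n := (Num.trunc (L%:R / e)).+1.
have n0 : (0 < n)%N by [].
have n0' : (0 : R) < n%:R by rewrite ltr0n.
have Ln : L%:R / n%:R <= e.
  rewrite ler_pdivrMr // mulrC -ler_pdivrMr //; apply: ltW; exact: truncnS_gt.
suff H : \sum_(l < L) m l <= N (cnt B L) + L%:R / n%:R.
  by apply: le_trans H _; rewrite lerD2l.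
pose p l := Num.trunc (n%:R * m l).
have pn l : (p l <= n)%N.
  rewrite /p truncn_le_nat; apply: (@le_lt_trans _ _ (n%:R)); last by rewrite ltr_nat.
  by rewrite ler_piMr ?ler0n //; case/andP: (m01 l).
have pdec i j : (i <= j)%N -> (p j <= p i)%N.
  by move=> ij; apply: le_truncn; rewrite ler_pM2l // mdec.
pose C l := `[0, m l]%classic : set R.
have nC : nested C.
  move=> i j ij t; rewrite /C /= !in_itv /= => /andP[t0 tm]; rewrite t0 /=.
  exact: le_trans tm (mdec _ _ ij).
have mC l : measurable (C l) by exact: measurable_itv.
have CI l : C l `<=` @I01 R.
  move=> t; rewrite /C /I01 /= !in_itv /= => /andP[-> tm] /=.
  by apply: le_trans tm _; case/andP: (m01 l).
have muC l : mu (C l) = (m l)%:E.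
  rewrite /C lebesgue_measure_itv /=.
  case: ifPn => h; first by rewrite oppr0 adde0.
  congr EFin; apply/eqP; rewrite eq_le; case/andP: (m01 l) => -> _; rewrite ?andbT ?andTb.
  by move: h; rewrite lte_fin -leNgt.
have NBC : N (cnt B L) = N (cnt C L).
  by apply: (N_cnt_eq HX) => // l _; rewrite mBfin muC.
pose E j l := @cellset R n (fun i => ((i + j) %% n < p l)%N).
have nE j : nested (E j).
  move=> i i' ii' t [It [tn H]]; split => //; split => //.
  exact: leq_trans H (pdec _ _ ii').
have mE j l : measurable (E j l) by exact: (@cell_measurable R).
have EI j l : E j l `<=` @I01 R by exact: (@cell_sub R).
have muE j l : mu (E j l) = ((p l)%:R / n%:R)%:E.
  rewrite (@cell_meas R) //; congr (_ %:E); congr (_ %:R / _).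
  rewrite (eq_bigr (fun i : 'I_n => ((j + i) %% n < p l : nat))) ?sum_rot_lt //.
  by move=> i _; rewrite addnC.
have NE j : N (cnt (E j) L) = N (cnt (E 0) L).
  by apply: (N_cnt_eq HX) => // l _; rewrite !muE.
have E0C l : E 0 l `<=` C l.
  move=> t [It [tn H]]; rewrite addn0 modn_small // in H.
  have t0 := I01_ge0 It.
  rewrite /C /= in_itv /= t0 /=.
  move: H; rewrite truncn_lt_nat ?mulr_ge0 ?ler0n // => H.
  have hp : (p l)%:R <= n%:R * m l.
    by rewrite /p truncn_le mulr_ge0 ?ler0n //; case/andP: (m01 l).
  have : n%:R * t < n%:R * m l := lt_le_trans H hp.
  by rewrite ltr_pM2l // => /ltW.
have E0le : N (cnt (E 0) L) <= N (cnt C L).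
  apply: (ss_ideal HX (X_cnt HX L mC).1 (meas_cnt L (mE 0)) _).2.
  apply: ae01_all => t _; rewrite !ger0_norm ?cnt_ge0 //; exact: cnt_mono.
have Hsum t : @I01 R t -> t != 1 -> \sum_(j < n) cnt (E j) L t = (\sum_(l < L) p l)%:R.
  move=> It t1; have t0 := I01_ge0 It.
  have tlt1 : t < 1 by rewrite lt_neqAle t1 I01_le1.
  have cn : (Num.trunc (n%:R * t) < n)%N.
    by rewrite truncn_lt_nat ?mulr_ge0 ?ler0n // -{2}(mulr1 n%:R) ltr_pM2l.
  have ind j l : \1_(E j l) t = (((Num.trunc (n%:R * t) + j) %% n < p l)%N)%:R :> R.
    rewrite /indic; suff -> : (t \in E j l) = ((Num.trunc (n%:R * t) + j) %% n < p l)%N by [].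
    apply/idP/idP => [/set_mem [_ [_ ->]] // | H].
    by apply/mem_set; split => //; split.
  rewrite /cnt (eq_bigr (fun j : 'I_n => \sum_(l < L) (((Num.trunc (n%:R * t) + j) %% n < p l)%N)%:R)); last first.
    by move=> j _; apply: eq_bigr => l _; exact: ind.
  rewrite exchange_big /= natr_sum; apply: eq_bigr => l _.
  by rewrite -natr_sum (sum_rot_lt _ (pn l)).
have Nconst : (\sum_(l < L) p l)%:R <= n%:R * N (cnt (E 0) L).
  have [Xs Ns] := N_sum HX n (fun j => (X_cnt HX L (mE j)).1).
  have [_ Nc] := X_const HX ((\sum_(l < L) p l)%:R).
  have H1 : N (fun _ => (\sum_(l < L) p l)%:R) <= N (fun t => \sum_(j < n) cnt (E j) L t).
    apply: (ss_ideal HX Xs (measurable_cst _) _).2.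
    by apply: ae01_but1 => t It t1; rewrite Hsum.
  rewrite (eq_bigr (fun _ => N (cnt (E 0) L)) (fun (j : 'I_n) _ => NE j)) sumr_const card_ord -mulr_natl in Ns.
  by rewrite Nc ger0_norm ?ler0n // in H1; apply: le_trans H1 Ns.
have step : \sum_(l < L) m l <= \sum_(l < L) ((p l)%:R / n%:R + 1 / n%:R).
  apply: ler_sum => l _; have := truncnS_gt (n%:R * m l); rewrite -/(p l) -natr1 => h.
  by rewrite -mulrDl ler_pdivlMr // mulrC; apply: ltW.
rewrite big_split /= -mulr_suml sumr_const card_ord -natr_sum in step.
apply: le_trans step _; rewrite lerD //.
  rewrite ler_pdivrMr // mulrC NBC; apply: le_trans Nconst _.
  by rewrite ler_pM2l.
by rewrite div1r mulr_natl.
Qed.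

End Main.


Lemma count_ge (R : realType) (x : R) (K : nat) : 0 <= x ->
  Num.min x K%:R <= \sum_(k < K) (nat_of_bool (k%:R < x))%:R.
Proof.
move=> x0; elim: K => [|K IH]; first by rewrite big_ord0 ge_min lexx orbT.
rewrite big_ord_recr /=; case: (ltP K%:R x) => Kx /=.
  apply: (@le_trans _ _ (Num.min x K%:R + 1)); last by rewrite lerD2r.
  rewrite -natr1; have : Num.min x K%:R = K%:R by apply/min_idPr/ltW.
  by move=> ->; rewrite ge_min lexx orbT.
rewrite addr0; apply: le_trans IH.
by rewrite !ge_min !le_min lexx /= (le_trans Kx) // ler_nat.
Qed.

Lemma count_le (R : realType) (x : R) (K : nat) : 0 <= x ->
  \sum_(l < K) (nat_of_bool ((l.+1)%:R < x))%:R <= x.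
Proof.
move=> x0; elim: K => [|K IH]; first by rewrite big_ord0.
rewrite big_ord_recr /=; case: (ltP K.+1%:R x) => Kx /=; last by rewrite addr0.
apply: (@le_trans _ _ (K.+1%:R)); last exact: ltW.
rewrite -[K.+1%:R]natr1 lerD2r; apply: (@le_trans _ _ (\sum_(l < K) (1 : R))).  
  by apply: ler_sum => l _; case: (_ < _).
by rewrite sumr_const card_ord.
Qed.

Section K.
Variable R : realType.
Local Notation mu := (@lebesgue_measure R).
Variables (X : set (R -> R)) (N : (R -> R) -> R).
Hypothesis HX : symmetric_space X N.

Lemma mI01 : measurable (@I01 R).
Proof. by rewrite /I01; exact: measurable_itv. Qed.

Lemma fin_mu (A : set R) : measurable A -> A `<=` @I01 R ->
  mu A = (fine (mu A))%:E /\ 0 <= fine (mu A) <= 1.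
Proof.
move=> mA AI.
have leA : (mu A <= 1%:E)%E.
  rewrite -(mu_I01 R); apply: (le_measure mu); rewrite ?inE; [exact: mA | exact: mI01 | exact: AI].
have E : mu A = (fine (mu A))%:E.
  rewrite fineK // ge0_fin_numE ?measure_ge0 //.
  exact: (le_lt_trans leA (ltry _)).
by split => //; rewrite -!lee_fin -E measure_ge0.
Qed.

Lemma int_cnt (A : nat -> set R) L : (forall l, measurable (A l)) -> (forall l, A l `<=` @I01 R) ->
  (\int[mu]_(x in @I01 R) (cnt A L x)%:E = (\sum_(l < L) fine (mu (A l)))%:E)%E.
Proof.
move=> mA AI.
transitivity (\int[mu]_(x in @I01 R) (\sum_(l < L) (\1_(A l) x : R)%:E))%E.
  by apply: eq_integral => x _; rewrite /cnt sumEFin.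
have mf : forall l : 'I_L, measurable_fun (@I01 R) (fun x => (\1_(A l) x : R)%:E).
  by move=> l; apply/measurable_EFinP; exact: measurable_indic.
have f0 : forall (l : 'I_L) x, @I01 R x -> (0 <= (\1_(A l) x : R)%:E)%E.
  by move=> l x _; rewrite lee_fin /indic ler0n.
rewrite (ge0_integral_sum mu mI01 mf f0).
rewrite -sumEFin; apply: eq_bigr => l _.
rewrite (@integral_indic _ _ _ mu _ mI01 _ (mA l)).
by rewrite setIidl // -(fin_mu (mA l) (AI l)).1.
Qed.

Lemma Kb_M (g : R -> R) (c : R) (M : nat) : (0 < M)%N ->
  measurable_fun (@I01 R) g -> (forall t, @I01 R t -> 0 <= g t) ->
  (forall t, @I01 R t -> g t <= c) -> X g ->
  (\int[mu]_(x in @I01 R) (g x)%:E <= (N g + M%:R^-1)%:E)%E.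
Proof.
move=> M0 mg g0 gc Xg.
have M0' : (0 : R) < M%:R by rewrite ltr0n.
have mI : measurable (@I01 R) by rewrite /I01; exact: measurable_itv.
have c0 : 0 <= c := le_trans (g0 0 (I01_0 R)) (gc 0 (I01_0 R)).
pose K := (M * (Num.trunc c).+1).+1.
pose B k := [set t | @I01 R t /\ k%:R / M%:R < g t].
have mB k : measurable (B k).
  rewrite /B (_ : [set t | _] = @I01 R `&` g @^-1` `]k%:R / M%:R, +oo[); last first.
    by apply/seteqP; split => t /=; rewrite in_itv /= andbT.
  exact: mg.
have BI k : B k `<=` @I01 R by move=> t [].
have nB : nested B.
  move=> i j ij t [It H]; split => //; apply: le_lt_trans H.
  by rewrite ler_pM2r ?invr_gt0 // ler_nat.
have indB k t : @I01 R t -> \1_(B k) t = (nat_of_bool (k%:R < M%:R * g t))%:R :> R.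
  move=> It; rewrite /indic.
  suff -> : (t \in B k) = (k%:R < M%:R * g t) by [].
  rewrite [M%:R * _]mulrC -(ltr_pdivrMr _ _ M0').
  by apply/idP/idP => [/set_mem [] // | H]; apply/mem_set.
pose k0 := (M * (Num.trunc c).+1)%N.
have k0c : M%:R * c < k0%:R.
  by rewrite /k0 natrM ltr_pM2l //; exact: truncnS_gt.
have pt1 t : @I01 R t -> g t <= M%:R^-1 * cnt B k0.+1 t.
  move=> It; rewrite /cnt (eq_bigr _ (fun (k : 'I_k0.+1) _ => indB k t It)).
  have := count_ge k0.+1 (mulr_ge0 (ltW M0') (g0 t It)).
  have -> : Num.min (M%:R * g t) k0.+1%:R = M%:R * g t.
    apply/min_idPl; apply: ltW; apply: (le_lt_trans _ (lt_trans k0c _)).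
      by rewrite ler_pM2l // gc.
    by rewrite ltr_nat.
  move=> H; apply: le_trans (ler_wpM2l _ H); first by rewrite mulKf ?lt0r_neq0.
  by rewrite invr_ge0 ltW.
pose B' l := B l.+1.
have mB' l : measurable (B' l) by exact: mB.
have BI' l : B' l `<=` @I01 R by exact: BI.
have nB' : nested B' by move=> i j ij; apply: nB.
have pt2 t : @I01 R t -> cnt B' k0 t <= M%:R * g t.
  move=> It; rewrite /cnt (eq_bigr _ (fun (l : 'I_k0) _ => indB l.+1 t It)).
  exact: count_le (mulr_ge0 (ltW M0') (g0 t It)).
have NB' : N (cnt B' k0) <= M%:R * N g.
  have Xg' := ss_scale HX M%:R Xg.
  rewrite -{1}(ger0_norm (ltW M0')) -(ss_norm_scale HX _ Xg).
  apply: (ss_ideal HX Xg' (meas_cnt k0 mB') _).2.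
  apply: ae01_all => t It; rewrite ger0_norm ?cnt_ge0 // ger0_norm ?mulr_ge0 ?ler0n ?g0 //.
  exact: pt2.
have MI := main_ineq HX k0 nB' mB' BI'.
have I1 : (\int[mu]_(x in @I01 R) (g x)%:E <=
           \int[mu]_(x in @I01 R) (M%:R^-1 * cnt B k0.+1 x)%:E)%E.
  apply: ge0_le_integral.
  - exact: mI01.
  - by move=> x Ix; rewrite lee_fin g0.
  - by apply/measurable_EFinP.
  - apply/measurable_EFinP; apply: measurable_funM; [exact: measurable_cst | exact: meas_cnt].
  - by move=> x Ix; rewrite lee_fin pt1.
have I2 : (\int[mu]_(x in @I01 R) (M%:R^-1 * cnt B k0.+1 x)%:E =
          (M%:R^-1 * \sum_(k < k0.+1) fine (mu (B k)))%:E)%E.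
  transitivity (\int[mu]_(x in @I01 R) ((M%:R^-1)%:E * (cnt B k0.+1 x)%:E))%E.
    by apply: eq_integral => x _; rewrite EFinM.
  have f10 : forall x, @I01 R x -> (0 <= (cnt B k0.+1 x)%:E)%E.
    by move=> x _; rewrite lee_fin cnt_ge0.
  have mf1 : measurable_fun (@I01 R) (fun x => (cnt B k0.+1 x)%:E).
    by apply/measurable_EFinP; exact: meas_cnt.
  have Mi0 : 0 <= M%:R^-1 :> R by rewrite invr_ge0 ltW.
  by rewrite (ge0_integralZl_EFin mu mI01 f10 mf1 Mi0) int_cnt // -EFinM.
apply: le_trans I1 _; rewrite I2 lee_fin.
rewrite big_ord_recl /=.
have [_ /andP[_ m0]] := fin_mu (mB 0%N) (BI 0%N).
have S1 : \sum_(i < k0) fine (mu (B (bump 0 i))) <= M%:R * N g.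
  by apply: le_trans NB'; apply: le_trans MI.
rewrite mulrDr addrC lerD //.
  by rewrite -ler_pdivlMl ?invr_gt0 // invrK.
by rewrite -[X in _ <= X]mulr1 ler_wpM2l // invr_ge0 ltW.
Qed.

End K.


Section K2.
Variable R : realType.
Local Notation mu := (@lebesgue_measure R).
Variables (X : set (R -> R)) (N : (R -> R) -> R).
Hypothesis HX : symmetric_space X N.

Lemma Kb (g : R -> R) (c : R) :
  measurable_fun (@I01 R) g -> (forall t, @I01 R t -> 0 <= g t) ->
  (forall t, @I01 R t -> g t <= c) -> X g ->
  (\int[mu]_(x in @I01 R) (g x)%:E <= (N g)%:E)%E.
Proof.
move=> mg g0 gc Xg; apply/lee_addgt0Pr => e e0.
pose M := (Num.trunc e^-1).+1.
apply: le_trans (Kb_M HX (M := M) _ mg g0 gc Xg) _ => //.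
rewrite -EFinD lee_fin lerD2l.
have M0 : (0 : R) < M%:R by rewrite ltr0n.
rewrite -(invrK e) lef_pV2 ?posrE ?invr_gt0 //; apply: ltW; exact: truncnS_gt.
Qed.

Import HBNNSimple.

Lemma K_abs (f : R -> R) : X f ->
  (\int[mu]_(x in @I01 R) `|f x|%:E <= (N f)%:E)%E.
Proof.
move=> Xf; have mf := ss_meas HX Xf.
rewrite ge0_integralE; last by move=> x _; rewrite lee_fin.
apply: ge_ereal_sup => _ [h /= hle <-].
have h0 x : ~ @I01 R x -> h x = 0.
  move=> nx; apply/eqP; rewrite eq_le fun_ge0 andbT -lee_fin.
  by have := hle x; rewrite /patch memNset.
have hf x : @I01 R x -> h x <= `|f x|.
  by move=> Ix; have := hle x; rewrite /patch mem_set // lee_fin.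
rewrite -integralT_nnsfun.
have -> : (\int[mu]_x (h x)%:E = \int[mu]_(x in @I01 R) (h x)%:E)%E.
  rewrite [RHS]integral_mkcond; apply: eq_integral => x _.
  rewrite /patch; case: ifP => // /negbT/negP nx.
  by rewrite h0 //; move=> Ix; apply: nx; exact: mem_set.
have mh : measurable_fun (@I01 R) h := measurable_funTS (measurable_funPT h).
have hfa : ae01 (fun t => `|h t| <= `|f t|).
  by apply: ae01_all => t It; rewrite ger0_norm ?fun_ge0 //; exact: hf.
have [Xh Nh] := ss_ideal HX Xf mh hfa.
case: (simple_bounded h) => B [_ HB].
have hB t : @I01 R t -> h t <= B + 1.
  move=> _; apply: le_trans (ler_norm _) _; apply: (HB (B + 1)) => //.
  by rewrite ltrDl.
have h0' t : @I01 R t -> 0 <= h t by move=> _; exact: fun_ge0.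
have := Kb mh h0' hB Xh; move/le_trans; apply.
by rewrite lee_fin.
Qed.

End K2.


Section HBsec.
Variable R : realType.
Variables (X : set (R -> R)) (N : (R -> R) -> R).
Hypothesis HX : symmetric_space X N.
Variable f : R -> R.
Hypothesis Xf : X f.
Hypothesis Hf : forall lam : R, 1 <= N (fun t => 1 - lam * f t).

Definition G0 : set ((R -> R) * R) :=
  [set p | exists a b : R, p = ((fun t => a + b * f t), a)].

Definition Pg (G : set ((R -> R) * R)) : Prop :=
  [/\ (forall x v, G (x, v) -> X x /\ v <= N x),
      (forall (a : R) x v y w, G (x, v) -> G (y, w) ->
          G ((fun t => a * x t + y t), a * v + w))
    & (G = set0 \/ G0 `<=` G)].

Lemma G0_dom x v : G0 (x, v) -> X x /\ v <= N x.
Proof.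
move=> [a [b [-> ->]]].
have Xab : X (fun t => a + b * f t).
  have -> : (fun t => a + b * f t) = (fun t => (fun t => b * f t) t + (fun _ => a) t).
    by apply/funext => t; rewrite addrC.
  exact: (ss_add HX (ss_scale HX b Xf) (X_const HX a).1).
split => //.
have [a0|a0] := eqVneq a 0; first by subst a; exact: (ss_norm_ge0 HX Xab).
have -> : (fun t => a + b * f t) = (fun t => a * (fun t => 1 - (- b / a) * f t) t).
  by apply/funext => t /=; field.
have X1 : X (fun t => 1 - (- b / a) * f t).
  have -> : (fun t => 1 - (- b / a) * f t) = (fun t => (fun t => (b / a) * f t) t + (fun _ => 1) t).
    by apply/funext => t /=; ring.
  exact: (ss_add HX (ss_scale HX _ Xf) (ss_one HX)).
rewrite (ss_norm_scale HX _ X1).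
apply: (le_trans (ler_norm a)); rewrite -[X in X <= _]mulr1 ler_wpM2l //.
Qed.

Lemma PG0 : Pg G0.
Proof.
split.
- exact: G0_dom.
- move=> c x v y w [a1 [b1 [-> ->]]] [a2 [b2 [-> ->]]].
  exists (c * a1 + a2), (c * b1 + b2); congr pair.
  by apply/funext => t; ring.
- by right.
Qed.

Lemma Xcomb x y a b : X x -> X y -> X (fun t => a * x t + b * y t).
Proof. by move=> Xx Xy; exact: (ss_add HX (ss_scale HX a Xx) (ss_scale HX b Xy)). Qed.

Lemma Xfun x y : X x -> x = y -> X y.
Proof. by move=> ? <-. Qed.

Lemma chainP (F : set (set ((R -> R) * R))) : F `<=` Pg -> total_on F subset ->
  Pg (\bigcup_(G in F) G).
Proof.
move=> FP Ftot; split.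
- by move=> x v [G FG Gxv]; have [Hd _ _] := FP G FG; exact: Hd.
- move=> a x v y w [G1 F1 G1x] [G2 F2 G2y].
  have [S12|S21] := Ftot _ _ F1 F2.
  + exists G2 => //; have [_ Hl _] := FP G2 F2; apply: Hl => //; exact: S12.
  + exists G1 => //; have [_ Hl _] := FP G1 F1; apply: Hl => //; exact: S21.
- case: (pselect (exists p, (\bigcup_(G in F) G) p)) => [[p [G FG Gp]]|none].
    right; have [_ _ [G0e|sub]] := FP G FG.
      by move: Gp; rewrite G0e.
    by move=> q G0q; exists G => //; exact: sub.
  left; apply/seteqP; split => // q Hq; exfalso; apply: none; by exists q.
Qed.

Lemma HB_exists : exists psi : (R -> R) -> R,
  [/\ (forall a x y, X x -> X y -> psi (fun t => a * x t + y t) = a * psi x + psi y),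
      (forall x, X x -> `|psi x| <= N x),
      psi (fun _ => 1) = 1 & psi f = 0].
Proof.
have [A [[Adom Alin AG0'] Amax]] := Zorn_bigcup chainP.
have zeroG0 : G0 ((fun t => 0 + 0 * f t), 0) by exists 0, 0.
have AG0 : G0 `<=` A.
  case: AG0' => // A0; exfalso; apply: (Amax G0); last exact: PG0.
  rewrite A0; split => // sub; exact: (sub _ zeroG0).
have zeroA : A ((fun t => 0 + 0 * f t), 0) by exact: AG0.
have scaleA a x v : A (x, v) -> A ((fun t => a * x t), a * v).
  move=> Axv; have := Alin a _ _ _ _ Axv zeroA; rewrite addr0.
  have -> // : (fun t => a * x t + (0 + 0 * f t)) = (fun t => a * x t).
  by apply/funext => t; ring.
have funcA x v w : A (x, v) -> A (x, w) -> v = w.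
  have N0 : N (fun _ => 0) = 0 by rewrite (X_const HX 0).2 normr0.
  have E : (fun t => -1 * x t + x t) = (fun _ => 0) by apply/funext => t; ring.
  move=> Axv Axw.
  have := (Adom _ _ (Alin (-1) _ _ _ _ Axv Axw)).2; rewrite E N0 => h1.
  have := (Adom _ _ (Alin (-1) _ _ _ _ Axw Axv)).2; rewrite E N0 => h2.
  lra.
have totA x : X x -> exists v, A (x, v).
  move=> Xx; apply: contrapT => nex.
  pose S := [set r | exists z w, A (z, w) /\ r = w - N (fun t => z t - x t)].
  have Xsub z : X z -> X (fun t => z t - x t).
    move=> Xz; apply: (Xfun (Xcomb 1 (-1) Xz Xx)); apply/funext => t; ring.
  have Xadd z : X z -> X (fun t => z t + x t).
    move=> Xz; apply: (Xfun (Xcomb 1 1 Xz Xx)); apply/funext => t; ring.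
  have ubS y v : A (y, v) -> ubound S (N (fun t => y t + x t) - v).
    move=> Ayv _ [z [w [Azw ->]]].
    have := (Adom _ _ (Alin 1 _ _ _ _ Azw Ayv)).2.
    have Xz := (Adom _ _ Azw).1; have Xy := (Adom _ _ Ayv).1.
    have -> : (fun t => 1 * z t + y t) =
              (fun t => (fun t => z t - x t) t + (fun t => y t + x t) t).
      by apply/funext => t; ring.
    move=> h; have := ss_norm_triangle HX (Xsub z Xz) (Xadd y Xy); lra.
  have S0 : S !=set0 by eexists; exists (fun t => 0 + 0 * f t), 0; split.
  have hS : has_ubound S by eexists; exact: (ubS _ _ zeroA).
  pose c := sup S.
  have c_ge z w : A (z, w) -> w - N (fun t => z t - x t) <= c.
    by move=> Azw; apply: (ub_le_sup hS); exists z, w.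
  have c_le y v : A (y, v) -> c <= N (fun t => y t + x t) - v.
    by move=> Ayv; apply: ge_sup S0 (ubS _ _ Ayv).
  pose A' := [set p | exists y v s, A (y, v) /\ p = ((fun t => y t + s * x t), v + s * c)].
  have AA' : A `<=` A'.
    move=> [y v] Ayv; exists y, v, 0; split => //; congr pair; last by ring.
    by apply/funext => t; ring.
  have PA' : Pg A'.
    split.
    - move=> x' v' [y [v [s [Ayv [-> ->]]]]].
      have Xy := (Adom _ _ Ayv).1.
      have Xys : X (fun t => y t + s * x t).
        by apply: (Xfun (Xcomb 1 s Xy Xx)); apply/funext => t; ring.
      split => //.
      case: (ltgtP s 0) => [sneg|spos|->].
      + pose r := - s; have r0 : 0 < r by rewrite /r oppr_gt0.
        have rE : s = - r by rewrite /r opprK.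
        have rn0 : r != 0 by rewrite lt0r_neq0.
        pose g := fun t => r^-1 * y t - x t.
        have Xg : X g by apply: (Xfun (Xcomb r^-1 (-1) Xy Xx)); apply/funext => t; rewrite /g; ring.
        have h : r^-1 * v - N g <= c := c_ge _ _ (scaleA r^-1 _ _ Ayv).
        have E : (fun t => y t + s * x t) = (fun t => r * g t).
          by apply/funext => t; rewrite /g rE; field.
        rewrite E (ss_norm_scale HX r Xg) gtr0_norm //.
        have := ler_wpM2l (ltW r0) h; rewrite mulrBr mulrA divff // mul1r => h2.
        rewrite rE; lra.
      + have sn0 : s != 0 by rewrite lt0r_neq0.
        pose g := fun t => s^-1 * y t + x t.
        have Xg : X g by apply: (Xfun (Xcomb s^-1 1 Xy Xx)); apply/funext => t; rewrite /g; ring.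
        have h : c <= N g - s^-1 * v := c_le _ _ (scaleA s^-1 _ _ Ayv).
        have E : (fun t => y t + s * x t) = (fun t => s * g t).
          by apply/funext => t; rewrite /g; field.
        rewrite E (ss_norm_scale HX s Xg) gtr0_norm //.
        have := ler_wpM2l (ltW spos) h; rewrite mulrBr mulrA divff // mul1r => h2.
        lra.
      + have -> : (fun t => y t + 0 * x t) = y by apply/funext => t; ring.
        rewrite mul0r addr0; exact: (Adom _ _ Ayv).2.
    - move=> a x1 v1 x2 v2 [y1 [w1 [s1 [A1 E1]]]] [y2 [w2 [s2 [A2 E2]]]].
      case: E1 => -> ->; case: E2 => -> ->.
      exists (fun t => a * y1 t + y2 t), (a * w1 + w2), (a * s1 + s2); split.
        exact: Alin.
      by congr pair; [apply/funext => t|]; ring.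
    - by right; exact: subset_trans AG0 AA'.
  apply: (Amax A') => //; split => // sub; apply: nex; exists c; apply: sub.
  exists (fun t => 0 + 0 * f t), 0, 1; split => //.
  by congr pair; [apply/funext => t|]; ring.
pose psi := fun x => xget 0 [set v | A (x, v)].
have Apsi x : X x -> A (x, psi x) by move=> Xx; exact: (xgetPex 0 (totA x Xx)).
exists psi; split.
- move=> a x y Xx Xy; apply: funcA (Apsi _ _) (Alin a _ _ _ _ (Apsi x Xx) (Apsi y Xy)).
  by apply: (Xfun (Xcomb a 1 Xx Xy)); apply/funext => t; ring.
- move=> x Xx; rewrite ler_norml (Adom _ _ (Apsi x Xx)).2 andbT.
  have := (Adom _ _ (scaleA (-1) _ _ (Apsi x Xx))).2.
  rewrite (ss_norm_scale HX (-1) Xx) normrN normr1 mul1r; lra.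
- have h : A ((fun _ => 1), 1).
    have -> : (fun _ : R => 1 : R) = (fun t => 1 + 0 * f t) by apply/funext => t; ring.
    by apply: AG0; exists 1, 0.
  by apply: funcA (Apsi _ (ss_one HX)) h.
- have h : A (f, 0).
    have -> : f = (fun t => 0 + 1 * f t) by apply/funext => t; ring.
    by apply: AG0; exists 0, 1.
  by apply: funcA (Apsi _ Xf) h.
Qed.

End HBsec.


Section Fin.
Variable R : realType.
Local Notation mu := (@lebesgue_measure R).
Variables (X : set (R -> R)) (N : (R -> R) -> R).
Hypothesis HX : symmetric_space X N.

Lemma X_int f : X f -> mu.-integrable (@I01 R) (EFin \o f).
Proof.
move=> Xf; apply/integrableP; split; first by apply/measurable_EFinP; exact: (ss_meas HX Xf).
exact: le_lt_trans (K_abs HX Xf) (ltry _).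
Qed.

Lemma Rint_le f : X f -> `|Rintegral mu (@I01 R) f| <= N f.
Proof.
move=> Xf; have := @le_normr_Rintegral _ _ _ mu _ f (@mI01 R) (X_int Xf); move/le_trans; apply.
have h1 := K_abs HX Xf.
have h0 : (0 <= \int[mu]_(x in @I01 R) `|f x|%:E)%E by apply: integral_ge0 => x _; rewrite lee_fin.
have fin : (\int[mu]_(x in @I01 R) `|f x|%:E)%E \is a fin_num.
  by rewrite ge0_fin_numE // (le_lt_trans h1 (ltry _)).
by rewrite /Rintegral -lee_fin fineK.
Qed.

Lemma Rint_one : Rintegral mu (@I01 R) (fun _ => 1) = 1.
Proof. rewrite Rintegral_cst; last exact: mI01. by rewrite mul1r; exact: (f_equal fine (mu_I01 R)). Qed.

Lemma Rint_lin a x y : X x -> X y ->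
  Rintegral mu (@I01 R) (fun t => a * x t + y t) =
  a * Rintegral mu (@I01 R) x + Rintegral mu (@I01 R) y.
Proof.
move=> Xx Xy.
rewrite (@RintegralD _ _ _ mu _ (fun t => a * x t) y (@mI01 R) (X_int (ss_scale HX a Xx)) (X_int Xy)).
by rewrite (@RintegralZl _ _ _ mu _ x a (@mI01 R) (X_int Xx)).
Qed.

Lemma norming_of (phi : (R -> R) -> R) :
  (forall a x y, X x -> X y -> phi (fun t => a * x t + y t) = a * phi x + phi y) ->
  (forall x, X x -> `|phi x| <= N x) -> phi (fun _ => 1) = 1 ->
  norming_at X N (fun _ => 1) phi.
Proof.
move=> lin bd one; split => //.
- by split => //; exists 1 => x Xx; rewrite mul1r; exact: bd.
- rewrite /dual_norm; apply/le_anti/andP; split.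
    apply: ge_sup.
      by exists 1; exists (fun _ => 1); [split; [exact: ss_one HX | rewrite (ss_normalized HX)] | rewrite one normr1].
    by move=> _ [g [Xg Ng] <-]; exact: le_trans (bd g Xg) Ng.
  apply: ub_le_sup.
    by exists 1 => _ [g [Xg Ng] <-]; exact: le_trans (bd g Xg) Ng.
  exists (fun _ => 1); last by rewrite one normr1.
  by split; [exact: ss_one HX | rewrite (ss_normalized HX)].
Qed.

Lemma bound_of (phi : (R -> R) -> R) : norming_at X N (fun _ => 1) phi ->
  forall x, X x -> `|phi x| <= N x.
Proof.
case=> [[lin [C HC]] dn _] x Xx.
have X0 := (X_const HX 0).1.
have phi0 : phi (fun _ => 0) = 0.
  have := lin 1 _ _ X0 X0.
  have -> : (fun t : R => 1 * (fun _ : R => 0 : R) t + (fun _ : R => 0 : R) t) = (fun _ => 0).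
    by apply/funext => t /=; ring.
  move=> h; lra.
have sc a : phi (fun t => a * x t) = a * phi x.
  have := lin a _ _ Xx X0.
  have -> : (fun t : R => a * x t + (fun _ : R => 0 : R) t) = (fun t => a * x t).
    by apply/funext => t /=; ring.
  by rewrite phi0 addr0.
have Nx0 := ss_norm_ge0 HX Xx.
case: (eqVneq (N x) 0) => [Nx|Nx].
  by have := HC x Xx; rewrite Nx mulr0.
have Nxp : 0 < N x by rewrite lt0r Nx.
pose g := fun t => (N x)^-1 * x t.
have Xg : X g := ss_scale HX _ Xx.
have Ng : N g = 1.
  by rewrite /g (ss_norm_scale HX _ Xx) gtr0_norm ?invr_gt0 // mulVf.
have hub : has_ubound [set `|phi f| | f in [set f | X f /\ N f <= 1]].
  exists `|C| => _ [h [Xh Nh] <-]; apply: le_trans (HC h Xh) _.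
  apply: le_trans (ler_wpM2r (ss_norm_ge0 HX Xh) (ler_norm C)) _.
  by rewrite -[X in _ <= X]mulr1 ler_wpM2l.
have Ng1 : N g <= 1 by rewrite Ng.
have := ub_le_sup hub (ex_intro2 _ _ g (conj Xg Ng1) erefl).
rewrite -/(dual_norm X N phi) dn /g sc normrM gtr0_norm ?invr_gt0 //.
by rewrite mulrC ler_pdivrMr // mul1r.
Qed.

End Fin.


Unset Implicit Arguments.

Lemma key_lt (R : realType) (X : set (R -> R)) (N : (R -> R) -> R) :
  symmetric_space X N ->
  (forall f, X f -> Rintegral (@lebesgue_measure R) (@I01 R) f != 0 ->
      exists lambda0 : R, N (fun t => 1 - lambda0 * f t) < 1) ->
  forall phi psi, norming_at X N (fun _ => 1) phi -> norming_at X N (fun _ => 1) psi ->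
  forall g, X g -> phi g < psi g -> False.
Proof.
move=> HX Ha phi psi Nphi Npsi g Xg ab.
have [[linphi _] _ phi1] := Nphi.
have [[linpsi _] _ psi1] := Npsi.
set a := phi g; set b := psi g; set I := Rintegral (@lebesgue_measure R) (@I01 R) g.
have Ea : phi g = a by []. have Eb : psi g = b by []. have EI : Rintegral (@lebesgue_measure R) (@I01 R) g = I by [].
clearbody a b I.
have [c [c1 c2 cI]] : exists c, [/\ - b < c, c < - a & I + c != 0].
  case: (eqVneq (I + - (a + b) / 2) 0) => h.
    exists ((- (a + b) / 2 - a) / 2); split.
    - lra.
    - lra.
    - by apply/eqP => E; lra.
  by exists (- (a + b) / 2); split => //; lra.
pose h := fun t => c * 1 + g t.
have Xh : X h := ss_add HX (ss_scale HX c (ss_one HX)) Xg.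
have phih : phi h = c + a by rewrite /h (linphi c _ _ (ss_one HX) Xg) phi1 mulr1 Ea.
have psih : psi h = c + b by rewrite /h (linpsi c _ _ (ss_one HX) Xg) psi1 mulr1 Eb.
have Ih : Rintegral (@lebesgue_measure R) (@I01 R) h != 0.
  rewrite /h (Rint_lin HX c (ss_one HX) Xg) Rint_one mulr1 EI addrC; exact: cI.
have [lam Hl] := Ha h Xh Ih.
pose k := fun t => - lam * h t + 1.
have Ek : (fun t => 1 - lam * h t) = k by apply/funext => t; rewrite /k; ring.
rewrite Ek in Hl.
have Xk : X k := ss_add HX (ss_scale HX (- lam) Xh) (ss_one HX).
have phik : phi k = - lam * (c + a) + 1 by rewrite /k (linphi _ _ _ Xh (ss_one HX)) phih phi1.
have psik : psi k = - lam * (c + b) + 1 by rewrite /k (linpsi _ _ _ Xh (ss_one HX)) psih psi1.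
have bphi := bound_of HX Nphi Xk.
have bpsi := bound_of HX Npsi Xk.
have p1 : phi k < 1 by apply: le_lt_trans (ler_norm _) (le_lt_trans bphi Hl).
have p2 : psi k < 1 by apply: le_lt_trans (ler_norm _) (le_lt_trans bpsi Hl).
rewrite phik in p1; rewrite psik in p2.
have ca : c + a < 0 by lra.
have cb : 0 < c + b by lra.
have l1 : 0 < lam * (c + a) by lra.
have l2 : 0 < lam * (c + b) by lra.
have ln : lam < 0.
  rewrite ltNge; apply/negP => l0; have := mulr_ge0_le0 l0 (ltW ca); lra.
have lp : 0 < lam.
  rewrite ltNge; apply/negP => l0; have := mulr_le0_ge0 l0 (ltW cb); lra.
lra.
Qed.

Theorem proposition4 (R : realType) (X : set (R -> R)) (N : (R -> R) -> R) :
  symmetric_space X N -> separable_space X N ->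
  ((forall f, X f -> Rintegral (@lebesgue_measure R) (@I01 R) f != 0 ->
      exists lambda0 : R, N (fun t => 1 - lambda0 * f t) < 1)
   <-> smooth_at X N (fun _ => 1)).
Proof.
move=> HX _; split.
- move=> Ha; split.
  + exact: ss_normalized HX.
  + have X0 : X (fun _ : R => 0 : R) := (X_const HX 0).1.
    have Hf0 : forall lam : R, 1 <= N (fun t => 1 - lam * (fun _ : R => 0 : R) t).
      move=> lam; have -> : (fun t => 1 - lam * (fun _ : R => 0 : R) t) = (fun _ => 1).
        by apply/funext => t /=; ring.
      by rewrite (ss_normalized HX).
    have [psi [lin bd one _]] := HB_exists HX X0 Hf0.
    by exists psi; apply: norming_of.
  + move=> phi psi Nphi Npsi g Xg; apply/eqP; rewrite eq_le; apply/andP; split.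
      by rewrite leNgt; apply/negP => h; exact: (@key_lt _ _ _ HX Ha _ _ Npsi Nphi _ Xg h).
    by rewrite leNgt; apply/negP => h; exact: (@key_lt _ _ _ HX Ha _ _ Nphi Npsi _ Xg h).
- move=> [N1 _ U] f Xf If; apply: contrapT => nex.
  have Hf : forall lam : R, 1 <= N (fun t => 1 - lam * f t).
    by move=> lam; rewrite leNgt; apply/negP => h; apply: nex; exists lam.
  have [psi [lin bd one psif]] := HB_exists HX Xf Hf.
  have Npsi := norming_of HX lin bd one.
  have Nint : norming_at X N (fun _ => 1) (Rintegral (@lebesgue_measure R) (@I01 R)).
    apply: (norming_of HX).
    - by move=> a x y Xx Xy; exact: (Rint_lin HX a Xx Xy).
    - by move=> x Xx; exact: (Rint_le HX Xx).
    - exact: Rint_one.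
  by move: If; rewrite (U _ _ Nint Npsi f Xf) psif eqxx.
Qed.
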